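(* Let $\nu\in\mathcal P^{(n)}_0$ be minimal and let $i\in\{1,\dots,n-1\}$ satisfy $\sigma_\nu^{-1}(i)<\sigma_\nu^{-1}(i+1)$. Let $\nu^{(i)}$ be the unique minimal partition in $\mathcal P^{(n)}_0$ with $\sigma_{\nu^{(i)}}=s_i\circ\sigma_\nu$, where $s_i=(i,i+1)\in\mathfrak S_n$. Then for every $j=1,\dots,n-1$, $$\beta_j(\nu^{(i)})=r_{\alpha_i}(\beta_j(\nu))\quad\text{or}\quad\beta_j(\nu^{(i)})=r_{\alpha_i}(\beta_j(\nu))+\delta.$$
   Context: Fix $n\ge3$. Root lattice: let $Q=\bigoplus_{i=0}^{n-1}\mathbb Z\alpha_i$ be the root lattice of $\widehat{\mathfrak{sl}}_n$, with indices of $\alpha$ taken mod $n$ (so $\alpha_n=\alpha_0$). Its bilinear form is $(\alpha_i,\alpha_j)=a_{ij}$, where $a_{ii}=2$, $a_{i,i\pm1}=-1$ and $a_{ij}=0$ otherwise (indices mod $n$). Let $\delta=\alpha_0+\dots+\alpha_{n-1}$ and $r_{\alpha_i}(\beta)=\beta-(\beta,\alpha_i)\alpha_i$. Colorless partitions: a partition $\nu$ is $n$-colorless if for every residue $i$ mod $n$ the number of boxes $(x,y)$ ($\nu_x\ge y$) with $x-y\equiv i$ is the same. Let $\nu'$ be the conjugate partition. Let $\mathcal P^{(n)}_0$ be the set of $n$-colorless partitions $\nu$ with $\nu_1\le n$ and $\nu'_n<n$. Associated data for $\nu\in\mathcal P^{(n)}_0$: - The values $\nu'_m+1-m$, $m=1,\dots,n$,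 are pairwise distinct mod $n$. Define $\sigma_\nu\in\mathfrak S_n$ by $\sigma_\nu(n-m+1)=\overline{\nu'_m+1-m}$, where $\overline a\in\{1,\dots,n\}$ denotes the representative of $a$ mod $n$. - For $i=1,\dots,n-1$ put $\beta_i(\nu)=\alpha_{\nu'_{i+1}-i}+\alpha_{\nu'_{i+1}-i+1}+\dots+\alpha_{\nu'_i-i}$, a sum of $\nu'_i-\nu'_{i+1}+1$ consecutive simple roots with indices mod $n$. Minimality: $\nu$ is called minimal if $\nu'_i<\nu'_{i+1}+n-1$ for all $i=1,\dots,n-1$. For each $\sigma\in\mathfrak S_n$ there is a unique minimal $\nu\in\mathcal P^{(n)}_0$ with $\sigma_\nu=\sigma$. *)

(* Defs.v *)
From HB Require Import structures.
From mathcomp Require Import all_boot all_order all_algebra.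
Unset Printing Implicit Defensive.
Import Order.TTheory GRing.Theory Num.Theory.

(* Partitions are seq nat: weakly decreasing list of positive parts;
   nu_x (1-indexed) is nth 0 nu (x-1). *)
Definition is_partition (nu : seq nat) : bool :=
  sorted geq nu && all (fun p => 0 < p) nu.

Definition conjp (nu : seq nat) (m : nat) : nat := count (fun p => m <= p) nu.

(* number of boxes (x,y) (1-indexed) with x - y = r mod n *)
Definition color_count (n : nat) (nu : seq nat) (r : nat) : nat :=
  (\sum_(x < size nu) \sum_(y < nth 0 nu x)
     ((((x%:Z - y%:Z) %% n%:Z)%Z == r%:Z)%R : nat))%N.

Definition colorless (n : nat) (nu : seq nat) : Prop :=
  forall r, r < n -> color_count n nu r = color_count n nu 0.

Definition P0 (n : nat) (nu : seq nat) : Prop :=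
  [/\ is_partition nu, colorless n nu, nth 0 nu 0 <= n & conjp nu n < n].

Definition minimal (n : nat) (nu : seq nat) : Prop :=
  forall i, 1 <= i <= n - 1 -> conjp nu i < conjp nu i.+1 + (n - 1).

Definition rep1 (n : nat) (a : int) : nat := (absz ((a - 1) %% n%:Z)%Z)%R.+1.

Definition sigma (n : nat) (nu : seq nat) (k : nat) : nat :=
  let m := (n - k + 1)%N in rep1 n ((conjp nu m)%:Z + 1 - m%:Z)%R.

Definition s_tr (i x : nat) : nat :=
  if x == i then i.+1 else if x == i.+1 then i else x.

Local Open Scope ring_scope.

(* Root lattice Q = Z^n with basis alpha_0..alpha_{n-1}; an element is its
   coefficient vector. alpha k for k : int is alpha_(k mod n). *)
Definition rootQ (n : nat) := {ffun 'I_n -> int}.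

Definition alpha (n : nat) (k : int) : rootQ n :=
  [ffun c : 'I_n => if ((k - (nat_of_ord c)%:Z) %% n%:Z)%Z == 0 then 1 else 0].

Definition delta (n : nat) : rootQ n := [ffun _ => 1].

(* Cartan matrix of affine sl_n (n >= 3) *)
Definition cartan (n : nat) (c d : 'I_n) : int :=
  if c == d then 2
  else if ((c.+1 %% n)%N == d) || ((d.+1 %% n)%N == c) then -1 else 0.

Definition bform (n : nat) (x y : rootQ n) : int :=
  \sum_(c : 'I_n) \sum_(d : 'I_n) x c * y d * cartan n c d.

Definition refl_alpha (n : nat) (i : int) (b : rootQ n) : rootQ n :=
  b - alpha n i *~ bform n b (alpha n i).

Definition beta (n : nat) (nu : seq nat) (j : nat) : rootQ n :=
  \sum_(s < (conjp nu j - conjp nu j.+1).+1)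
     alpha n ((conjp nu j.+1)%:Z - j%:Z + s%:Z).

(* Main.v *)
Require Import Defs.
From mathcomp Require Import all_boot all_order all_algebra zify.
Import Order.TTheory GRing.Theory Num.Theory.
Local Open Scope ring_scope.

Lemma divmodU (n : nat) (x q r : int) : (0 < n)%N -> 0 <= r -> r < n%:Z -> x = q * n%:Z + r ->
  (x %/ n%:Z)%Z = q /\ (x %% n%:Z)%Z = r.
Proof.
move=> n0 r0 rn ->; split.
  rewrite divzMDl ?divz_small ?addr0 //; last by rewrite -lt0n.
  by rewrite r0 /=; case: n n0 rn.
by rewrite modzMDl modz_small // r0.
Qed.

Lemma decomp (n : nat) (x : int) : (0 < n)%N ->
  x = (x %/ n%:Z)%Z * n%:Z + (absz (x %% n%:Z)%Z)%:Z /\ (absz (x %% n%:Z)%Z < n)%N.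
Proof.
move=> n0.
have h0 : 0 <= (x %% n%:Z)%Z by apply: modz_ge0; rewrite eqz_nat -lt0n.
have h1 : (x %% n%:Z)%Z < n%:Z by apply: ltz_pmod; rewrite ltz_nat.
have e : (absz (x %% n%:Z)%Z)%:Z = (x %% n%:Z)%Z by lia.
split; first by rewrite e -divz_eq.
by rewrite -ltz_nat e.
Qed.

Definition G (n : nat) (t : int) : rootQ n :=
  [ffun c : 'I_n => ((t - (nat_of_ord c)%:Z) %/ n%:Z)%Z].

Lemma Gqr (n : nat) (q : int) (r : nat) (c : 'I_n) : (r < n)%N ->
  G n (q * n%:Z + r%:Z) c = q - (if (r < c)%N then 1 else 0).
Proof.
move=> rn; have n0 : (0 < n)%N by lia.
have cn := ltn_ord c.
rewrite ffunE; case: ifP => h.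
  by have [-> _] := @divmodU n (q * n%:Z + r%:Z - (c:nat)%:Z) (q - 1) (r%:Z + n%:Z - (c:nat)%:Z) n0
    ltac:(lia) ltac:(lia) ltac:(nia).
by have [-> _] := @divmodU n (q * n%:Z + r%:Z - (c:nat)%:Z) q (r%:Z - (c:nat)%:Z) n0
   ltac:(lia) ltac:(lia) ltac:(nia); rewrite subr0.
Qed.

Lemma modqr (n : nat) (q : int) (r : nat) : (r < n)%N ->
  ((q * n%:Z + r%:Z) %% n%:Z)%Z = r%:Z.
Proof.
move=> rn; have n0 : (0 < n)%N by lia.
by have [_ ->] := @divmodU n (q * n%:Z + r%:Z) q r%:Z n0 ltac:(lia) ltac:(lia) erefl.
Qed.

Lemma alphaqr (n : nat) (q : int) (r : nat) (c : 'I_n) : (r < n)%N ->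
  alpha n (q * n%:Z + r%:Z) c = if r == c then 1 else 0.
Proof.
move=> rn; have n0 : (0 < n)%N by lia.
have cn := ltn_ord c.
rewrite ffunE; case: (ltnP r c) => h.
  have [_ ->] := @divmodU n (q * n%:Z + r%:Z - (c:nat)%:Z) (q - 1) (r%:Z + n%:Z - (c:nat)%:Z) n0
    ltac:(lia) ltac:(lia) ltac:(nia).
  have -> : (r == c) = false by lia.
  case: ifP => //; lia.
have [_ ->] := @divmodU n (q * n%:Z + r%:Z - (c:nat)%:Z) q (r%:Z - (c:nat)%:Z) n0
   ltac:(lia) ltac:(lia) ltac:(nia).
by case: ifP; case: ifP => //; lia.
Qed.

Lemma decompE (n : nat) (x : int) : (0 < n)%N ->
  exists q (r : nat), (r < n)%N /\ x = q * n%:Z + r%:Z.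
Proof. by move=> n0; have [e h] := @decomp n x n0; exists (x %/ n%:Z)%Z, (absz (x %% n%:Z)%Z). Qed.

Lemma ffunBE (n : nat) (f g : rootQ n) c : (f - g) c = f c - g c.
Proof. by rewrite !ffunE. Qed.
Lemma ffunDE (n : nat) (f g : rootQ n) c : (f + g) c = f c + g c.
Proof. by rewrite !ffunE. Qed.

Lemma ffunNE (n : nat) (f : rootQ n) c : (- f) c = - f c.
Proof. by rewrite !ffunE. Qed.

Lemma alphaG (n : nat) (k : int) : (0 < n)%N -> alpha n k = G n k - G n (k - 1).
Proof.
move=> n0; apply/ffunP => c.
have cn := ltn_ord c.
have [q [r [rn ->]]] := @decompE n k n0.
rewrite alphaqr // ffunBE Gqr //.
case: r rn => [|r] rn.
  have -> : q * n%:Z + 0%:Z - 1 = (q - 1) * n%:Z + (n.-1)%:Z by nia.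
  rewrite Gqr; last by lia.
  by repeat case: ifP => ?; lia.
have -> : q * n%:Z + r.+1%:Z - 1 = q * n%:Z + r%:Z by lia.
rewrite Gqr; last by lia.
by repeat case: ifP => ?; lia.
Qed.

Lemma sum_alpha (n : nat) (p : int) (L : nat) : (0 < n)%N ->
  \sum_(s < L) alpha n (p + s%:Z) = G n (p + L%:Z - 1) - G n (p - 1).
Proof.
move=> n0; elim: L => [|L IH]; first by rewrite big_ord0 addr0 subrr.
rewrite big_ord_recr /= IH alphaG //.
have -> : p + (L.+1)%:Z - 1 = p + L%:Z by lia.
by rewrite addrC addrA subrK.
Qed.

Lemma sum_pick (n : nat) (b : rootQ n) (a : 'I_n) (k : int) :
  \sum_c b c * (if c == a then k else 0) = b a * k.
Proof.
rewrite (bigD1 a) //= eqxx big1 ?addr0 // => c /negbTE ->; by rewrite mulr0.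
Qed.

Lemma modS (n c : nat) : (c < n)%N -> (c.+1 %% n)%N = if c.+1 == n then 0%N else c.+1.
Proof. move=> cn; case: eqP => [->|h]; first by rewrite modnn. by rewrite modn_small //; lia. Qed.

Lemma bformE (n : nat) (i : nat) (I0 Im Ip : 'I_n) (b : rootQ n) :
  (3 <= n)%N -> (1 <= i <= n - 1)%N ->
  nat_of_ord I0 = i -> nat_of_ord Im = (i - 1)%N -> nat_of_ord Ip = (i.+1 %% n)%N ->
  bform n b (alpha n i%:Z) = 2 * b I0 - b Im - b Ip.
Proof.
move=> hn hi e0 em ep.
have aE : forall d, alpha n i%:Z d = if d == I0 then 1 else 0.
  move=> d; have -> : i%:Z = 0 * n%:Z + i%:Z by rewrite mul0r add0r.
  by rewrite alphaqr; [rewrite -val_eqE /= e0 eq_sym | lia].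
have inner : forall c, \sum_d b c * alpha n i%:Z d * cartan n c d = b c * cartan n c I0.
  move=> c; rewrite (bigD1 I0) //= aE eqxx mulr1 big1 ?addr0 // => d /negbTE hd.
  by rewrite aE hd mulr0 mul0r.
have cE : forall c, cartan n c I0 = (if c == I0 then 2 else 0) - (if c == Im then 1 else 0)
    - (if c == Ip then 1 else 0).
  move=> c; have := ltn_ord c; rewrite /cartan -!val_eqE /= e0 em ep => cn.
  rewrite !modS //; last by lia.
  case: (c.+1 =P n) => ?; case: (i.+1 =P n) => ?;
  by repeat case: ifP => ?; lia.
rewrite /bform; under eq_bigr => c _ do rewrite inner cE !mulrBr.
rewrite !sumrB !sum_pick; lia.
Qed.

Definition rp (i r : nat) : nat := if r == (i - 1)%N then i else if r == i then (i - 1)%N else r.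
Definition tau (n i : nat) (x : int) : int := (x %/ n%:Z)%Z * n%:Z + (rp i (absz (x %% n%:Z)%Z))%:Z.

Lemma rp_lt (n i r : nat) : (1 <= i <= n - 1)%N -> (r < n)%N -> (rp i r < n)%N.
Proof. by move=> hi rn; rewrite /rp; repeat case: ifP => ?; lia. Qed.

Lemma tauqr (n i : nat) (q : int) (r : nat) : (r < n)%N ->
  tau n i (q * n%:Z + r%:Z) = q * n%:Z + (rp i r)%:Z.
Proof.
move=> rn; have n0 : (0 < n)%N by lia.
rewrite /tau; have [-> ->] := @divmodU n (q * n%:Z + r%:Z) q r%:Z n0 ltac:(lia) ltac:(lia) erefl.
by [].
Qed.

Lemma tauG (n i : nat) (I0 Im Ip : 'I_n) (q : int) (r : nat) (c : 'I_n) :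
  (3 <= n)%N -> (1 <= i <= n - 1)%N ->
  nat_of_ord I0 = i -> nat_of_ord Im = (i - 1)%N -> nat_of_ord Ip = (i.+1 %% n)%N ->
  (r < n)%N ->
  G n (tau n i (q * n%:Z + r%:Z)) c =
  G n (q * n%:Z + r%:Z) c - (if i == c then 1 else 0) *
    ((2 * G n (q * n%:Z + r%:Z) I0 - G n (q * n%:Z + r%:Z) Im - G n (q * n%:Z + r%:Z) Ip)
     - (if i.+1 == n then -1 else 0)).
Proof.
move=> hn hi e0 em ep rn.
rewrite tauqr // !Gqr //; last exact: rp_lt.
rewrite e0 em ep modS; last by lia.
have := ltn_ord c; rewrite /rp => cn.
case: (i.+1 =P n) => ?; case: (r =P (i - 1)%N) => ?; case: (r =P i) => ? /=; by repeat case: ifP => ?; lia.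
Qed.

Lemma reflG (n i : nat) (x y : int) : (3 <= n)%N -> (1 <= i <= n - 1)%N ->
  refl_alpha n i%:Z (G n x - G n y) = G n (tau n i x) - G n (tau n i y).
Proof.
move=> hn hi; have n0 : (0 < n)%N by lia.
have i0 : (i < n)%N by lia.
have im : (i - 1 < n)%N by lia.
have ip : (i.+1 %% n < n)%N by rewrite ltn_pmod.
pose I0 := Ordinal i0; pose Im := Ordinal im; pose Ip := Ordinal ip.
apply/ffunP => c.
rewrite /refl_alpha ffunBE ffunMzE mulrzz (@bformE n i I0 Im Ip) // !ffunBE.
have aE : alpha n i%:Z c = if i == c then 1 else 0.
  have -> : i%:Z = 0 * n%:Z + i%:Z by rewrite mul0r add0r.
  by rewrite alphaqr.
rewrite aE.
have [qx [rx [rxn ->]]] := @decompE n x n0.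
have [qy [ry [ryn ->]]] := @decompE n y n0.
rewrite !(@tauG n i I0 Im Ip) //.
case: (i == c); lia.
Qed.

Lemma Dbound (n : nat) (u v : int) (a1 a2 b1 b2 : nat) : (3 <= n)%N ->
  1 <= u * n%:Z + a1%:Z - a2%:Z <= n%:Z - 1 ->
  1 <= v * n%:Z + b1%:Z - b2%:Z <= n%:Z - 1 ->
  b1%:Z - a1%:Z - (b2%:Z - a2%:Z) <= 1 ->  -2 <= b1%:Z - a1%:Z - (b2%:Z - a2%:Z) ->
  v - u = 0 \/ v - u = 1.
Proof.
move=> hn h1 h2 h3 h4.
have e : (v - u) * n%:Z = (v * n%:Z + b1%:Z - b2%:Z) - (u * n%:Z + a1%:Z - a2%:Z) - (b1%:Z - a1%:Z - (b2%:Z - a2%:Z)) by lia.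
have [hl|hl] := leP (v - u) (-1).
  have : (v - u) * n%:Z <= - n%:Z by nia.
  lia.
have [hr|hr] := leP 2 (v - u).
  have : 2 * n%:Z <= (v - u) * n%:Z by nia.
  lia.
lia.
Qed.

Lemma str (i r : nat) : (1 <= i)%N -> s_tr i r.+1 = (rp i r).+1.
Proof. by move=> hi; rewrite /s_tr /rp; repeat case: ifP => ?; lia. Qed.

Lemma conj_mono (s : seq nat) (m : nat) : (conjp s m.+1 <= conjp s m)%N.
Proof. by apply: sub_count => p /= h; apply: ltnW. Qed.

Lemma betaG (n : nat) (s : seq nat) (j : nat) : (0 < n)%N ->
  beta n s j = G n ((conjp s j)%:Z - j%:Z) - G n ((conjp s j.+1)%:Z - (j.+1)%:Z).
Proof.
move=> n0; rewrite /beta sum_alpha //.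
have := conj_mono s j => h.
congr (G n _ - G n _); lia.
Qed.

Lemma sigmaE (n : nat) (s : seq nat) (m : nat) : (1 <= m <= n)%N ->
  sigma n s (n - m + 1)%N = (absz (((conjp s m)%:Z - m%:Z) %% n%:Z)%Z).+1.
Proof.
move=> hm; rewrite /sigma.
have -> : (n - (n - m + 1) + 1 = m)%N by lia.
rewrite /rep1; do 3 f_equal; lia.
Qed.

Theorem mainTheorem12 (n : nat) (hn : (3 <= n)%N) (nu mu : seq nat) (i : nat) :
  P0 n nu -> minimal n nu ->
  (1 <= i <= n - 1)%N ->
  (* sigma_nu^{-1}(i) < sigma_nu^{-1}(i+1) *)
  (forall a b : nat, (1 <= a <= n)%N -> (1 <= b <= n)%N ->
     sigma n nu a = i -> sigma n nu b = i.+1 -> (a < b)%N) ->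
  (* mu = nu^{(i)}: minimal, in P0, with sigma_mu = s_i o sigma_nu *)
  P0 n mu -> minimal n mu ->
  (forall k : nat, (1 <= k <= n)%N -> sigma n mu k = s_tr i (sigma n nu k)) ->
  forall j : nat, (1 <= j <= n - 1)%N ->
    beta n mu j = refl_alpha n (i%:Z) (beta n nu j) \/
    beta n mu j = refl_alpha n (i%:Z) (beta n nu j) + delta n.
Proof.
move=> _ minnu hi hord _ minmu hsig j hj.
have n0 : (0 < n)%N by lia.
rewrite !betaG // reflG //.
have mnu := minnu j hj; have mmu := minmu j hj.
have monu := conj_mono nu j; have momu := conj_mono mu j.
have [qa1 [ra1 [ra1n ea1]]] := @decompE n ((conjp nu j)%:Z - j%:Z) n0.
have [qa2 [ra2 [ra2n ea2]]] := @decompE n ((conjp nu j.+1)%:Z - (j.+1)%:Z) n0.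
have [qb1 [rb1 [rb1n eb1]]] := @decompE n ((conjp mu j)%:Z - j%:Z) n0.
have [qb2 [rb2 [rb2n eb2]]] := @decompE n ((conjp mu j.+1)%:Z - (j.+1)%:Z) n0.
have sa1 := @sigmaE n nu j ltac:(lia); rewrite ea1 modqr // in sa1.
have sa2 := @sigmaE n nu j.+1 ltac:(lia); rewrite ea2 modqr // in sa2.
have sb1 := @sigmaE n mu j ltac:(lia); rewrite eb1 modqr // in sb1.
have sb2 := @sigmaE n mu j.+1 ltac:(lia); rewrite eb2 modqr // in sb2.
have r1 : rb1 = rp i ra1.
  have := hsig (n - j + 1)%N ltac:(lia); rewrite sa1 sb1 /= str; last by lia.
  by case.
have r2 : rb2 = rp i ra2.
  have := hsig (n - j.+1 + 1)%N ltac:(lia); rewrite sa2 sb2 /= str; last by lia.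
  by case.
have excl : ~ (ra1 = (i - 1)%N /\ ra2 = i).
  move=> [h1 h2].
  have := hord (n - j + 1)%N (n - j.+1 + 1)%N ltac:(lia) ltac:(lia).
  rewrite sa1 sa2 /= h1 h2 => H.
  have := H ltac:(lia) erefl; lia.
have hD : (qb1 - qb2) - (qa1 - qa2) = 0 \/ (qb1 - qb2) - (qa1 - qa2) = 1.
  apply: (@Dbound n (qa1 - qa2) (qb1 - qb2) ra1 ra2 rb1 rb2 hn).
  - have e : (qa1 - qa2) * n%:Z + ra1%:Z - ra2%:Z =
       ((conjp nu j)%:Z - j%:Z) - ((conjp nu j.+1)%:Z - (j.+1)%:Z) by rewrite ea1 ea2; lia.
    rewrite e; lia.
  - have e : (qb1 - qb2) * n%:Z + rb1%:Z - rb2%:Z =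
       ((conjp mu j)%:Z - j%:Z) - ((conjp mu j.+1)%:Z - (j.+1)%:Z) by rewrite eb1 eb2; lia.
    rewrite e; lia.
  - rewrite r1 r2 /rp; repeat case: ifP => ?; lia.
  - rewrite r1 r2 /rp; repeat case: ifP => ?; lia.
rewrite ea1 ea2 eb1 eb2 !tauqr // -r1 -r2.
case: hD => hD; [left | right]; apply/ffunP => c;
  rewrite ?ffunDE ?ffunBE ?ffunNE !Gqr // ?rp_lt //; rewrite ?ffunE; lia.
Qed.
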